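(* Assume the setting below and that $M_i(1)\ge M_i(0)$ for all $1\le i\le n$. Fix $\boldsymbol\delta\in\mathbb R^n$, $\alpha\in(0,1)$ and $\beta\in(0,\alpha)$. Let $\hat M$ be an integer-valued statistic with $\mathbb P\big(\sum_{i=1}^n M_i(0)\le\hat M\big)\ge1-\beta$. Let $n_{11}=\sum_iZ_iM_i$, $n_{01}=\sum_i(1-Z_i)M_i$ and $\underline m=n_{11}+n_{01}-\hat M$. For each control unit $j$ let $w_j=Y_j$ if $M_j=1$ and $w_j=+\infty$ if $M_j=0$. For each $i$ with $Z_i=M_i=1$ let $A_i=\sum_{j:Z_j=0}\psi_{i,j}(+\infty,w_j)$, $B_i=\sum_{j:Z_j=0}\psi_{i,j}(Y_i-\delta_i,w_j)$ and $D_i=\phi(A_i)-\phi(B_i)$, and order these units as $l_1,\dots,l_{n_{11}}$ so that $D_{l_1}\le\dots\le D_{l_{n_{11}}}$. Let $L^\ast=\{l_1,\dots,l_{m^\ast}\}$ with $m^\ast=\max\{0,\min\{\underline m,n_{11}\}\}$. Define $\tilde{\boldsymbol Y}\in\overline{\mathbb R}^n$ by $\tilde Y_i=+\infty$ if $Z_i=M_i=1$ and $i\in L^\ast$; $\tilde Y_i=Y_i-\delta_i$ if $Z_i=M_i=1$ and $i\notin L^\ast$; $\tilde Y_i=+\infty$ if $Z_i=1,M_i=0$; $\tilde Y_i=Y_i$ if $Z_i=0,M_i=1$; $\tilde Y_i=+\infty$ if $Z_i=0,M_i=0$. Let $$p=G_{\mathrm R,\phi}\big(t_{\mathrm R,\phi}(\boldsymbol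 Z,\tilde{\boldsymbol Y})\big)+\beta,$$ where $t_{\mathrm R,\phi}$ is the Mann–Whitney-type statistic. Then, if $H_{\boldsymbol\delta}:\boldsymbol\tau=\boldsymbol\delta$ holds, $\mathbb P(p\le\alpha)\le\alpha$.
   Context: There are $n$ units. Unit $i$ has fixed potential outcomes $Y_i^\star(0),Y_i^\star(1)\in\mathbb R$ and fixed potential missingness indicators $M_i(0),M_i(1)\in\{0,1\}$; $\tau_i=Y_i^\star(1)-Y_i^\star(0)$, $\boldsymbol\tau=(\tau_1,\dots,\tau_n)^\intercal$. The assignment $\boldsymbol Z\in\{0,1\}^n$ is drawn from a completely randomized experiment (CRE): for fixed positive integers $n_1,n_0$, $n_1+n_0=n$, $\boldsymbol Z$ is uniform over vectors in $\{0,1\}^n$ with exactly $n_1$ ones, independently of all potential outcomes and missingness indicators; probabilities are over $\boldsymbol Z$. Observed missingness $M_i=Z_iM_i(1)+(1-Z_i)M_i(0)$; the realized outcome $Z_iY_i^\star(1)+(1-Z_i)Y_i^\star(0)$ is observed, and denoted $Y_i$, only when $M_i=1$. The statistic $\hat M$ is a function of the observed data. $\overline{\mathbb R}=\mathbb R\cup\{\pm\infty\}$; $\psi_{i,j}(y,y')=\mathbf 1\{y>y'\}+\mathbf 1\{y=y'\}\mathbf 1\{i\ge j\}$ for $y,y'\in\overline{\mathbb R}$. $\phi$ is a fixed nondecreasing real function on the nonnegative integers. The Mann–Whitney-type statistic is $t_{\mathrm R,\phi}(\boldsymbol z,\boldsymbol y)=\sum_{i=1}^n z_i\phi\big(\sum_{j=1}^n(1-z_j)\psi_{i,j}(y_i,y_j)\big)$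 for $\boldsymbol z\in\{0,1\}^n,\boldsymbol y\in\overline{\mathbb R}^n$. $G_{\mathrm R,\phi}(c)=\mathbb P(t_{\mathrm R,\phi}(\boldsymbol A,\boldsymbol y_0)\ge c)$ with $\boldsymbol A$ from the CRE and $\boldsymbol y_0\in\mathbb R^n$ any fixed vector (independent of $\boldsymbol y_0$). Ties among the $D_i$ may be broken arbitrarily. *)

(* Defs.v *)
From HB Require Import structures.
From mathcomp Require Import all_boot all_order all_algebra.
From mathcomp Require Import reals constructive_ereal.
Set Implicit Arguments. Unset Strict Implicit. Unset Printing Implicit Defensive.
Import Order.TTheory GRing.Theory Num.Theory.
Local Open Scope ring_scope.

(* Assignments z : {ffun 'I_n -> bool}; units are indexed 0..n-1 (order preserved). *)
Definition cre (n n1 : nat) (z : {ffun 'I_n -> bool}) : bool :=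
  #|[set i | z i]| == n1.

Definition prob (R : realType) (n n1 : nat) (E : pred {ffun 'I_n -> bool}) : R :=
  (#|[set z : {ffun 'I_n -> bool} | cre n1 z && E z]|%:R) / (#|[set z : {ffun 'I_n -> bool} | cre n1 z]|%:R).

Arguments prob {R n} n1 E.

Definition psi (R : realType) (n : nat) (i j : 'I_n) (y y' : \bar R) : nat :=
  ((y' < y)%E : nat) + ((y == y') && (j <= i)%N : nat).

Definition tR (R : realType) (n : nat) (phi : nat -> R)
  (z : {ffun 'I_n -> bool}) (y : 'I_n -> \bar R) : R :=
  \sum_(i < n | z i) phi (\sum_(j < n | ~~ z j) psi i j (y i) (y j))%N.

Definition GR (R : realType) (n n1 : nat) (phi : nat -> R) (y0 : 'I_n -> R) (c : R) : R :=
  prob n1 (fun a => c <= tR phi a (fun i => (y0 i)%:E)).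

Definition Mobs (n : nat) (M1 M0 : 'I_n -> bool) (z : {ffun 'I_n -> bool}) :
  {ffun 'I_n -> bool} := [ffun i => if z i then M1 i else M0 i].

Definition Yreal (R : realType) (n : nat) (Y1 Y0 : 'I_n -> R) (z : {ffun 'I_n -> bool})
  (i : 'I_n) : R := if z i then Y1 i else Y0 i.

Definition Yobs (R : realType) (n : nat) (Y1 Y0 : 'I_n -> R) (M1 M0 : 'I_n -> bool)
  (z : {ffun 'I_n -> bool}) (i : 'I_n) : option R :=
  if Mobs M1 M0 z i then Some (Yreal Y1 Y0 z i) else None.

Definition wv (R : realType) (n : nat) (Y1 Y0 : 'I_n -> R) (M1 M0 : 'I_n -> bool)
  (z : {ffun 'I_n -> bool}) (j : 'I_n) : \bar R :=
  if Mobs M1 M0 z j then (Yreal Y1 Y0 z j)%:E else +oo%E.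

Definition Acnt (R : realType) (n : nat) (Y1 Y0 : 'I_n -> R) (M1 M0 : 'I_n -> bool)
  (z : {ffun 'I_n -> bool}) (i : 'I_n) : nat :=
  \sum_(j < n | ~~ z j) psi i j +oo%E (wv Y1 Y0 M1 M0 z j).

Definition Bcnt (R : realType) (n : nat) (Y1 Y0 : 'I_n -> R) (M1 M0 : 'I_n -> bool)
  (delta : 'I_n -> R) (z : {ffun 'I_n -> bool}) (i : 'I_n) : nat :=
  \sum_(j < n | ~~ z j) psi i j ((Yreal Y1 Y0 z i - delta i)%:E) (wv Y1 Y0 M1 M0 z j).

Definition Dval (R : realType) (n : nat) (phi : nat -> R) (Y1 Y0 : 'I_n -> R)
  (M1 M0 : 'I_n -> bool) (delta : 'I_n -> R) (z : {ffun 'I_n -> bool}) (i : 'I_n) : R :=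
  phi (Acnt Y1 Y0 M1 M0 z i) - phi (Bcnt Y1 Y0 M1 M0 delta z i).

Definition n11 (n : nat) (M1 M0 : 'I_n -> bool) (z : {ffun 'I_n -> bool}) : nat :=
  #|[set i | z i && Mobs M1 M0 z i]|.
Definition n01 (n : nat) (M1 M0 : 'I_n -> bool) (z : {ffun 'I_n -> bool}) : nat :=
  #|[set i | ~~ z i && Mobs M1 M0 z i]|.

Definition mstar (n : nat) (M1 M0 : 'I_n -> bool) (z : {ffun 'I_n -> bool}) (mhat : int) : int :=
  Num.max 0 (Num.min ((n11 M1 M0 z + n01 M1 M0 z)%:Z - mhat) (n11 M1 M0 z)%:Z).

Definition Lstar (n : nat) (M1 M0 : 'I_n -> bool) (z : {ffun 'I_n -> bool}) (mhat : int)
  (ord : seq 'I_n) : seq 'I_n := take `|mstar M1 M0 z mhat|%N ord.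

Definition Ytilde (R : realType) (n : nat) (Y1 Y0 : 'I_n -> R) (M1 M0 : 'I_n -> bool)
  (delta : 'I_n -> R) (z : {ffun 'I_n -> bool}) (L : seq 'I_n) (i : 'I_n) : \bar R :=
  if z i then
    (if Mobs M1 M0 z i then
       (if i \in L then +oo%E else (Yreal Y1 Y0 z i - delta i)%:E)
     else +oo%E)
  else
    (if Mobs M1 M0 z i then (Yreal Y1 Y0 z i)%:E else +oo%E).

(* Main.v *)
Require Import Defs.
From HB Require Import structures.
From mathcomp Require Import all_boot all_order all_algebra.
From mathcomp Require Import reals constructive_ereal.
From mathcomp Require Import fingroup perm zify ring lra.
Import Order.TTheory GRing.Theory Num.Theory.
Local Open Scope ring_scope.

Section Prob.
Variables (R : realType) (n n1 : nat).
Implicit Types (E F G : pred {ffun 'I_n -> bool}).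

Lemma prob_ge0 E : 0 <= prob (R:=R) n1 E.
Proof. by rewrite /prob divr_ge0 ?ler0n. Qed.

Lemma prob_mono E F : (forall z, cre n1 z -> E z -> F z) ->
  prob (R:=R) n1 E <= prob n1 F.
Proof.
move=> h; rewrite /prob ler_wpM2r ?invr_ge0 ?ler0n // ler_nat.
apply: subset_leq_card; apply/subsetP => z; rewrite !inE => /andP[c e].
by rewrite c (h z c e).
Qed.

Lemma prob_union E F G : (forall z, cre n1 z -> E z -> F z || G z) ->
  prob (R:=R) n1 E <= prob n1 F + prob n1 G.
Proof.
move=> h; rewrite /prob -mulrDl ler_wpM2r ?invr_ge0 ?ler0n // -natrD ler_nat.
apply: leq_trans (leq_card_setU _ _).
apply: subset_leq_card; apply/subsetP => z; rewrite !inE => /andP[c e].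
by rewrite c /=; case/orP: (h z c e) => ->; rewrite ?orbT.
Qed.

Lemma prob_compl E : #|[set z : {ffun 'I_n -> bool} | cre n1 z]| != 0%N ->
  prob (R:=R) n1 (fun z => ~~ E z) = 1 - prob n1 E.
Proof.
move=> hN; rewrite /prob.
have := cardsID [set z | E z] [set z : {ffun 'I_n -> bool} | cre n1 z].
have -> : [set z | cre n1 z] :&: [set z | E z] = [set z | cre n1 z && E z].
  by apply/setP => z; rewrite !inE.
have -> : [set z | cre n1 z] :\: [set z | E z] = [set z | cre n1 z && ~~ E z].
  by apply/setP => z; rewrite !inE andbC.
move=> hc; rewrite -hc in hN *; rewrite natrD.
have ab : (#|[set z | cre n1 z && E z]|%:R + #|[set z | cre n1 z && ~~ E z]|%:R : R) != 0.
  by rewrite -natrD pnatr_eq0.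
by apply/eqP; rewrite eq_sym subr_eq -mulrDl addrC divff.
Qed.

Lemma superunif (T : {ffun 'I_n -> bool} -> R) (g : R) : 0 <= g ->
  prob (R:=R) n1 (fun z => prob n1 (fun a => T z <= T a) <= g) <= g.
Proof.
move=> g0.
set P := (fun z => cre n1 z && (prob (R:=R) n1 (fun a => T z <= T a) <= g)).
case: (pickP P) => [z0 Pz0|P0]; last first.
  rewrite /prob.
  have -> : [set z | cre n1 z && (prob n1 (fun a => T z <= T a) <= g)] = set0.
    by apply/setP => z; rewrite !inE; have := P0 z.
  by rewrite cards0 mul0r.
have [zm Pzm zmin] := @arg_minP _ _ _ z0 P T Pz0.
move: (Pzm) => /andP[_ hz].
apply: le_trans hz; apply: prob_mono => z cz /= h.
by apply: zmin; rewrite /P cz.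
Qed.

End Prob.
Section Rank.
Variables (R : realType) (n : nat) (y : 'I_n -> \bar R).

Definition lec (j i : 'I_n) : bool := (y j < y i)%E || ((y i == y j) && (j <= i)%N).

Lemma psiE i j : psi i j (y i) (y j) = lec j i.
Proof.
rewrite /psi /lec; case: ltgtP => //= h.
Qed.

Lemma lec_total i j : lec i j || lec j i.
Proof.
rewrite /lec; case: (ltgtP (y i) (y j)) => //= h; rewrite ?orbT //.
by rewrite leq_total.
Qed.

Lemma lec_anti i j : lec i j -> lec j i -> i = j.
Proof.
rewrite /lec; case: (ltgtP (y i) (y j)) => //= h; rewrite ?h ?eqxx /= => h1 h2.
by apply/val_inj/anti_leq; rewrite h1 h2.
Qed.

Lemma lec_trans i j k : lec i j -> lec j k -> lec i k.
Proof.
rewrite /lec => /orP[h1|/andP[/eqP e1 h1]] /orP[h2|/andP[/eqP e2 h2]].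
- by rewrite (lt_trans h1 h2).
- by rewrite e2 h1.
- by rewrite -e1 h2.
- by rewrite e2 e1 eqxx (leq_trans h1 h2) orbT.
Qed.

Lemma lec_refl i : lec i i.
Proof. by rewrite /lec eqxx leqnn orbT. Qed.

Definition rk (i : 'I_n) : nat := #|[set j | lec j i]|.

Lemma rk_gt0 i : (0 < rk i)%N.
Proof. by apply/card_gt0P; exists i; rewrite inE lec_refl. Qed.

Lemma rk_le i : (rk i <= n)%N.
Proof. by rewrite /rk -[X in (_ <= X)%N]card_ord max_card. Qed.

Lemma rk_lt j i : lec j i -> j != i -> (rk j < rk i)%N.
Proof.
move=> h ne; apply: proper_card; apply/properP; split.
  by apply/subsetP => k; rewrite !inE => hk; apply: lec_trans hk h.
exists i; rewrite !inE ?lec_refl //.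
by apply/negP => h'; move/eqP: ne; apply; apply: lec_anti.
Qed.

Lemma rk_leP j i : lec j i = (rk j <= rk i)%N.
Proof.
case: (eqVneq j i) => [->|ne]; first by rewrite lec_refl leqnn.
apply/idP/idP => [h|h]; first by apply: ltnW; apply: rk_lt.
case/orP: (lec_total j i) => // h2.
have ne' : i != j by rewrite eq_sym.
have h3 := rk_lt i j h2 ne'.
by have := leq_trans h3 h; rewrite ltnn.
Qed.

Lemma rk_inj : injective rk.
Proof.
move=> i j e; apply: lec_anti; by rewrite rk_leP e.
Qed.

Definition pos (i : 'I_n) : 'I_n.
refine (@Ordinal n (rk i).-1 _).
by have := rk_gt0 i; have := rk_le i; lia.
Defined.

Lemma pos_inj : injective pos.
Proof.
move=> i j /(congr1 val) /= e; apply: rk_inj.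
by have := rk_gt0 i; have := rk_gt0 j; lia.
Qed.

Definition pp : {perm 'I_n} := perm pos_inj.

Lemma lec_pp j i : lec j i = (pp j <= pp i)%N.
Proof.
rewrite !permE /= rk_leP.
by have := rk_gt0 i; have := rk_gt0 j; lia.
Qed.

End Rank.

Definition t0 (R : realType) (n : nat) (phi : nat -> R) (w : {ffun 'I_n -> bool}) : R :=
  \sum_(k < n | w k) phi (\sum_(l < n | ~~ w l) (l <= k)%N : nat)%N.

Arguments t0 {R n}.
Arguments pp {R n} y.
Arguments lec {R n} y.
Lemma tR_t0 (R : realType) (n : nat) (phi : nat -> R) (y : 'I_n -> \bar R) z :
  tR phi z y = t0 phi [ffun k => z ((pp y)^-1%g k)].
Proof.
rewrite /t0 (reindex_inj (h := pp y) (@perm_inj _ _)) /tR.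
apply: eq_big => [i|i _]; first by rewrite ffunE permK.
congr (phi _).
rewrite [in RHS](reindex_inj (h := pp y) (@perm_inj _ _)).
apply: eq_big => [j|j _]; first by rewrite ffunE permK.
by rewrite psiE lec_pp.
Qed.

Lemma prob_perm (R : realType) (n n1 : nat) (s : {perm 'I_n}) (E : pred {ffun 'I_n -> bool}) :
  prob (R:=R) n1 (fun z => E [ffun k => z (s k)]) = prob n1 E.
Proof.
have hinj : injective (fun z : {ffun 'I_n -> bool} => [ffun k => z (s k)]).
  move=> a b /ffunP e; apply/ffunP => k.
  by have := e (s^-1%g k); rewrite !ffunE permKV.
have hcre (z : {ffun 'I_n -> bool}) : cre n1 [ffun k => z (s k)] = cre n1 z.
  rewrite /cre -!sum1dep_card (reindex_inj (h := s^-1%g) (@perm_inj _ _)).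
  by congr (_ == _); apply: eq_bigl => k; rewrite ffunE permKV.
rewrite /prob -!sum1dep_card.
rewrite [in RHS](reindex_inj hinj) [in X in _ / X](reindex_inj hinj).
by congr (_%:R / _%:R); apply: eq_bigl => z; rewrite hcre.
Qed.

Lemma prob_tR (R : realType) (n n1 : nat) (phi : nat -> R) (y : 'I_n -> \bar R) c :
  prob (R:=R) n1 (fun a => c <= tR phi a y) = prob n1 (fun a : {ffun 'I_n -> bool} => c <= t0 phi a).
Proof.
transitivity (prob (R:=R) n1 (fun z => (fun a => c <= t0 phi a) [ffun k => z ((pp y)^-1%g k)])); last exact: prob_perm.
rewrite /prob; congr (_ / _); congr (_%:R); apply/eq_card => z; rewrite !inE.
by rewrite tR_t0.
Qed.

Lemma GR_indep (R : realType) (n n1 : nat) (phi : nat -> R) (y0 : 'I_n -> R)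
   (V : 'I_n -> \bar R) c :
  GR n1 phi y0 c = prob n1 (fun a => c <= tR phi a V).
Proof. by rewrite /GR !prob_tR. Qed.
Lemma psi_oo (R : realType) n (i j : 'I_n) (x : R) (w : \bar R) :
  (psi i j (x%:E) w <= psi i j +oo%E w)%N.
Proof.
rewrite /psi; case: w => [r||] //=.
- rewrite ltry /= lte_fin eqe; case: (ltgtP x r) => //= _.
  by case: (j <= i)%N.
- by rewrite ltNyr.
Qed.

Lemma sum_le (R : realType) n (D : 'I_n -> R) (k : nat) :
  forall (P Q : {set 'I_n}), #|P| = k -> (#|P| <= #|Q|)%N ->
  (forall i j, i \in P -> j \in Q -> D i <= D j) ->
  (forall j, j \in Q -> 0 <= D j) ->
  \sum_(i in P) D i <= \sum_(j in Q) D j.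
Proof.
elim: k => [|k IH] P Q hk hPQ hD h0.
  move/eqP: hk; rewrite cards_eq0 => /eqP ->.
  by rewrite big_set0 sumr_ge0.
have /card_gt0P [i iP] : (0 < #|P|)%N by rewrite hk.
have /card_gt0P [j jQ] : (0 < #|Q|)%N by apply: leq_trans hPQ; rewrite hk.
rewrite (big_setD1 i iP) (big_setD1 j jQ) /=.
apply: lerD; first exact: hD.
apply: IH.
- by move: hk; rewrite (cardsD1 i P) iP; case.
- by move: hPQ; rewrite (cardsD1 i P) (cardsD1 j Q) iP jQ.
- by move=> a b; rewrite !inE => /andP[_ aP] /andP[_ bQ]; apply: hD.
- by move=> b; rewrite !inE => /andP[_ bQ]; apply: h0.
Qed.

Lemma sum_le' (R : realType) n (D : 'I_n -> R) (p q : pred 'I_n) :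
  (#|[set i | p i]| <= #|[set i | q i]|)%N ->
  (forall i j, p i -> q j -> D i <= D j) ->
  (forall j, q j -> 0 <= D j) ->
  \sum_(i | p i) D i <= \sum_(j | q j) D j.
Proof.
move=> h1 h2 h3.
have -> : \sum_(i | p i) D i = \sum_(i in [set i | p i]) D i.
  by apply: eq_bigl => i; rewrite inE.
have -> : \sum_(i | q i) D i = \sum_(i in [set i | q i]) D i.
  by apply: eq_bigl => i; rewrite inE.
apply: (@sum_le _ _ _ #|[set i | p i]|) => //.
- by move=> i j; rewrite !inE; apply: h2.
- by move=> j; rewrite inE; apply: h3.
Qed.

Lemma sum_if (R : realType) n (P c : pred 'I_n) (f g : 'I_n -> R) :
  \sum_(i | P i) (if c i then g i else f i) =
  \sum_(i | P i) f i - \sum_(i | P i && c i) (f i - g i).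
Proof.
rewrite (bigID c) /=.
have -> : \sum_(i | P i && c i) (if c i then g i else f i) = \sum_(i | P i && c i) g i.
  by apply: eq_bigr => i /andP[_ ->].
have -> : \sum_(i | P i && ~~ c i) (if c i then g i else f i) = \sum_(i | P i && ~~ c i) f i.
  by apply: eq_bigr => i /andP[_ /negbTE ->].
rewrite [\sum_(i | P i) f i](bigID c) /= sumrB.
lra.
Qed.

Definition Vv (R : realType) n (Y0 : 'I_n -> R) (M0 : 'I_n -> bool) (i : 'I_n) : \bar R :=
  if M0 i then (Y0 i)%:E else +oo%E.

Arguments Vv {R n}.
Lemma key (R : realType) (n : nat) (Y1 Y0 : 'I_n -> R) (M1 M0 : 'I_n -> bool)
  (phi : nat -> R) (delta : 'I_n -> R) (z : {ffun 'I_n -> bool}) (ord : seq 'I_n) (m : nat) :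
  (forall i, M0 i <= M1 i)%N ->
  {homo phi : a b / (a <= b)%N >-> a <= b} ->
  (forall i, Y1 i - Y0 i = delta i) ->
  perm_eq ord [seq i <- enum 'I_n | z i && Mobs M1 M0 z i] ->
  sorted (fun a b => Dval phi Y1 Y0 M1 M0 delta z a <= Dval phi Y1 Y0 M1 M0 delta z b) ord ->
  (m <= #|[set i | z i && M1 i && ~~ M0 i]|)%N -> (m <= size ord)%N ->
  tR phi z (Ytilde Y1 Y0 M1 M0 delta z (take m ord)) <= tR phi z (Vv Y0 M0).
Proof.
move=> hM hphi hY hperm hsort hmK hmo.
set L := take m ord.
set D := Dval phi Y1 Y0 M1 M0 delta z.
set f := fun i => phi (Acnt Y1 Y0 M1 M0 z i).
set g := fun i => phi (Bcnt Y1 Y0 M1 M0 delta z i).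
have MobsT i : z i -> Mobs M1 M0 z i = M1 i by move=> zi; rewrite /Mobs ffunE zi.
have MobsC i : ~~ z i -> Mobs M1 M0 z i = M0 i by move=> zi; rewrite /Mobs ffunE (negbTE zi).
have mem_ord i : (i \in ord) = z i && M1 i.
  rewrite (perm_mem hperm) mem_filter mem_enum andbT.
  by case zi: (z i) => //=; rewrite MobsT.
have uord : uniq ord by rewrite (perm_uniq hperm) filter_uniq // enum_uniq.
have D0 i : 0 <= D i.
  rewrite /D /Dval subr_ge0; apply: hphi; rewrite /Acnt /Bcnt.
  by apply: leq_sum => j _; apply: psi_oo.
have tY : tR phi z (Ytilde Y1 Y0 M1 M0 delta z L) =
    \sum_(i | z i) (if M1 i && (i \notin L) then g i else f i).
  rewrite /tR; apply: eq_bigr => i zi.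
  have ctrl : forall j, ~~ z j -> Ytilde Y1 Y0 M1 M0 delta z L j = wv Y1 Y0 M1 M0 z j.
    by move=> j zj; rewrite /Ytilde (negbTE zj) /wv.
  rewrite /f /g /Acnt /Bcnt.
  have -> : Ytilde Y1 Y0 M1 M0 delta z L i =
     if M1 i && (i \notin L) then (Yreal Y1 Y0 z i - delta i)%:E else +oo%E.
    by rewrite /Ytilde zi MobsT //; case: (M1 i); case: (i \in L).
  case: ifP => _; congr (phi _); apply: eq_bigr => j zj; by rewrite ctrl.
have tV : tR phi z (Vv Y0 M0) = \sum_(i | z i) (if M0 i then g i else f i).
  rewrite /tR; apply: eq_bigr => i zi.
  have ctrl : forall j, ~~ z j -> Vv Y0 M0 j = wv Y1 Y0 M1 M0 z j.
    by move=> j zj; rewrite /Vv /wv MobsC // /Yreal (negbTE zj).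
  rewrite /f /g /Acnt /Bcnt.
  have -> : Vv Y0 M0 i = if M0 i then (Yreal Y1 Y0 z i - delta i)%:E else +oo%E.
    rewrite /Vv /Yreal zi; case: (M0 i) => //; congr (_%:E).
    by rewrite -(hY i); lra.
  case: ifP => _; congr (phi _); apply: eq_bigr => j zj; by rewrite ctrl.
rewrite tY tV !sum_if lerD2l lerN2.
have fgD i : f i - g i = D i by [].
under eq_bigr do rewrite fgD.
under [X in _ <= X]eq_bigr do rewrite fgD.
rewrite (bigID (fun i => i \in L)) [X in _ <= X](bigID M0) /= addrC.
have -> : \sum_(i | (z i && M0 i) && (i \notin L)) D i =
          \sum_(i | [&& z i, M1 i & i \notin L] && M0 i) D i.
  apply: eq_bigl => i; move: (hM i).
  by case: (z i); case: (M0 i); case: (M1 i); case: (i \in L).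
rewrite lerD2l.
have memL i : i \in L -> z i && M1 i by move=> /mem_take; rewrite mem_ord.
apply: sum_le'.
set P := [set i | _]; set Q := [set i | _].
- set K := [set i | z i && M1 i && ~~ M0 i].
  set LS := [set i | i \in L].
  have h1 := cardsID [set i | M0 i] LS.
  have h2 := cardsID LS K.
  have e1 : LS :&: [set i | M0 i] = P.
    apply/setP => i; rewrite !inE; case iL: (i \in L); last by rewrite !andbF.
    by move: (memL i iL) => /andP[-> _]; rewrite ?andbT.
  have e2 : LS :\: [set i | M0 i] = K :&: LS.
    apply/setP => i; rewrite !inE; case iL: (i \in L); last by rewrite !andbF.
    by move: (memL i iL) => /andP[-> ->]; rewrite ?andbT.
  have e3 : K :\: LS = Q.
    apply/setP => i; rewrite !inE.
    by case: (z i); case: (M0 i); case: (M1 i); case: (i \in L).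
  have hLS : #|LS| = m.
    rewrite /LS cardsE; apply/eqP; move/card_uniqP: (take_uniq m uord) => ->.
    by rewrite size_takel.
  have hmK2 : (m <= #|K|)%N by [].
  rewrite e1 e2 in h1; rewrite e3 in h2; clear -h1 h2 hLS hmK2; lia.
- move=> i j /andP[/andP[_ _] iL] /andP[/and3P[zj M1j jL] _].
  have jd : j \in drop m ord.
    have : j \in ord by rewrite mem_ord zj M1j.
    by rewrite -{1}(cat_take_drop m ord) mem_cat (negbTE jL).
  have tr : transitive (fun a b => D a <= D b).
    by move=> b a c; apply: le_trans.
  move: hsort; rewrite (sorted_pairwise tr) -(cat_take_drop m ord) pairwise_cat.
  by case/and3P => /allrelP h _ _; apply: h.
- by move=> j _; apply: D0.
Qed.
Theorem theorem4 (R : realType) (n n1 n0 : nat)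
  (Y1 Y0 : 'I_n -> R) (M1 M0 : 'I_n -> bool)
  (phi : nat -> R) (delta : 'I_n -> R) (alpha beta : R)
  (Mhat : {ffun 'I_n -> bool} -> {ffun 'I_n -> bool} -> ('I_n -> option R) -> int)
  (ordr : {ffun 'I_n -> bool} -> seq 'I_n) (y0 : 'I_n -> R) :
  (0 < n1)%N -> (0 < n0)%N -> (n1 + n0)%N = n ->
  (forall i, M0 i <= M1 i)%N ->
  {homo phi : a b / (a <= b)%N >-> a <= b} ->
  0 < alpha < 1 -> 0 < beta < alpha ->
  1 - beta <= prob n1 (fun z =>
     (\sum_(i < n) (M0 i : nat))%:Z <= Mhat z (Mobs M1 M0 z) (Yobs Y1 Y0 M1 M0 z)) ->
  (forall z, perm_eq (ordr z) [seq i <- enum 'I_n | z i && Mobs M1 M0 z i]) ->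
  (forall z, sorted (fun a b => Dval phi Y1 Y0 M1 M0 delta z a
                                <= Dval phi Y1 Y0 M1 M0 delta z b) (ordr z)) ->
  (forall i, Y1 i - Y0 i = delta i) ->
  prob n1 (fun z =>
    GR n1 phi y0
      (tR phi z (Ytilde Y1 Y0 M1 M0 delta z
         (Lstar M1 M0 z (Mhat z (Mobs M1 M0 z) (Yobs Y1 Y0 M1 M0 z)) (ordr z))))
    + beta <= alpha) <= alpha.
Proof.
move=> n1p n0p hn hM hphi /andP[a0 a1] /andP[b0 ba] hgood hperm hsort hY.
set good := fun z : {ffun 'I_n -> bool} =>
  (\sum_(i < n) (M0 i : nat))%:Z <= Mhat z (Mobs M1 M0 z) (Yobs Y1 Y0 M1 M0 z).
set T := fun a : {ffun 'I_n -> bool} => tR phi a (Vv Y0 M0).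
have hN : #|[set z : {ffun 'I_n -> bool} | cre n1 z]| != 0%N.
  apply/negP => /eqP h0; move: hgood; rewrite /prob h0 invr0 mulr0 => h.
  move: h a1 ba; clear; move=> h a1 ba; lra.
have sumM0 : (\sum_(i < n) (M0 i : nat))%N = #|[set i | M0 i]|.
  rewrite -sum1dep_card [RHS]big_mkcond /=; apply: eq_bigr => i _; by case: (M0 i).
have keyz z : good z ->
    tR phi z (Ytilde Y1 Y0 M1 M0 delta z
         (Lstar M1 M0 z (Mhat z (Mobs M1 M0 z) (Yobs Y1 Y0 M1 M0 z)) (ordr z))) <= T z.
  move=> gz; rewrite /Lstar /T.
  have MobsT i : z i -> Mobs M1 M0 z i = M1 i by move=> zi; rewrite /Mobs ffunE zi.
  have MobsC i : ~~ z i -> Mobs M1 M0 z i = M0 i by move=> zi; rewrite /Mobs ffunE (negbTE zi).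
  have uord : uniq (ordr z) by rewrite (perm_uniq (hperm z)) filter_uniq // enum_uniq.
  have hsize : size (ordr z) = n11 M1 M0 z.
    rewrite /n11 -(card_uniqP uord) -cardsE; apply: eq_card => i.
    by rewrite !inE (perm_mem (hperm z)) mem_filter mem_enum andbT.
  set K := [set i | z i && M1 i && ~~ M0 i].
  have c1 := cardsID [set i | z i] [set i | M0 i].
  have c2 := cardsID [set i | M0 i] [set i | z i && M1 i].
  have e1 : [set i | ~~ z i && Mobs M1 M0 z i] = [set i | M0 i] :\: [set i | z i].
    apply/setP => i; rewrite !inE; case zi: (z i) => //=; by rewrite MobsC ?zi.
  have e2 : [set i | z i && Mobs M1 M0 z i] = [set i | z i && M1 i].
    apply/setP => i; rewrite !inE; case zi: (z i) => //=; by rewrite MobsT.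
  have e3 : [set i | z i && M1 i] :&: [set i | M0 i] = [set i | M0 i] :&: [set i | z i].
    apply/setP => i; rewrite !inE; move: (hM i).
    by case: (z i); case: (M0 i); case: (M1 i).
  have e4 : [set i | z i && M1 i] :\: [set i | M0 i] = K.
    by apply/setP => i; rewrite !inE andbC.
  rewrite e3 e4 in c2.
  have hn01 : n01 M1 M0 z = #|[set i | M0 i] :\: [set i | z i]| by rewrite /n01 e1.
  have hn11 : n11 M1 M0 z = #|[set i | z i && M1 i]| by rewrite /n11 e2.
  move: gz; rewrite /good sumM0 => gz.
  apply: key => //.
  - rewrite /mstar; move: gz c1 c2 hn01 hn11.
    set mh := Mhat _ _ _; set a := n11 _ _ _; set b := n01 _ _ _.
    move=> gz c1 c2 hn01 hn11; rewrite -/K; clearbody mh a b K; lia.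
  - rewrite hsize /mstar; set mh := Mhat _ _ _; set a := n11 _ _ _; lia.
apply: le_trans (@prob_union R n n1 _ (fun z => ~~ good z)
   (fun z => prob n1 (fun a => T z <= T a) <= alpha - beta) _) _.
- move=> z cz hE; case gz: (good z) => //=.
  have hk := keyz z gz.
  rewrite /T -(@GR_indep R n n1 phi y0 (Vv Y0 M0)).
  apply: le_trans (_ : GR n1 phi y0 (tR phi z (Ytilde Y1 Y0 M1 M0 delta z
         (Lstar M1 M0 z (Mhat z (Mobs M1 M0 z) (Yobs Y1 Y0 M1 M0 z)) (ordr z)))) <= _).
    rewrite /GR; apply: prob_mono => a _ h; exact: le_trans hk h.
  by rewrite lerBrDr.
- rewrite prob_compl // -/good.
  have hg : 0 <= alpha - beta by rewrite subr_ge0 ltW.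
  have hs := @superunif R n n1 T (alpha - beta) hg.
  move: hgood; rewrite -/good => hgood.
  move: hs hgood; set p1 := prob _ _; set p2 := prob _ _ => hs hgood.
  clearbody p1 p2; move: hs hgood; clear; move=> hs hgood; lra.
Qed.
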